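(* Let $\omega_0,\alpha,\omega_d,h,H>0$, $J_0=\begin{bmatrix}0&\omega_0\\-\omega_0&0\end{bmatrix}$, $\tilde\Lambda=\begin{bmatrix}0&0\\0&-\frac{\alpha}{2}\end{bmatrix}$. Then the origin of the system on $\mathbb{R}\times\mathbb{R}^2\times\mathbb{R}$ $$\dot r=-hr+H\bar z^\top(J_0+\tilde\Lambda e^{\hat d})\bar z,\qquad \dot{\bar z}=(J_0+\tilde\Lambda)\bar z+(e^{\hat d}-1)\tilde\Lambda\bar z,\qquad \dot{\hat d}=-\omega_d(e^{\hat d}-1)$$ is globally uniformly asymptotically stable. *)

(* Defs.v *)
From Stdlib Require Import Reals Lra.
From Coquelicot Require Import Coquelicot.
Open Scope R_scope.

Definition qform (m11 m12 m21 m22 z1 z2 : R) : R :=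
  z1 * (m11 * z1 + m12 * z2) + z2 * (m21 * z1 + m22 * z2).

(* J0 = [[0, w0], [-w0, 0]],  Lt = [[0,0],[0,-a/2]]  (Lambda tilde). *)
Definition f_r (w0 a h H r z1 z2 d : R) : R :=
  - h * r + H * qform (0 + 0 * exp d) (w0 + 0 * exp d)
                      (- w0 + 0 * exp d) (0 + (- (a / 2)) * exp d) z1 z2.

(* (J0 + Lt) z + (e^d - 1) Lt z *)
Definition f_z1 (w0 a z1 z2 d : R) : R :=
  ((0 + 0) * z1 + (w0 + 0) * z2) + (exp d - 1) * (0 * z1 + 0 * z2).
Definition f_z2 (w0 a z1 z2 d : R) : R :=
  ((- w0 + 0) * z1 + (0 + (- (a / 2))) * z2)
  + (exp d - 1) * (0 * z1 + (- (a / 2)) * z2).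

Definition f_d (wd d : R) : R := - wd * (exp d - 1).

Record traj := mktraj { tr : R -> R; tz1 : R -> R; tz2 : R -> R; td : R -> R }.

Definition nrm (x : traj) (t : R) : R :=
  sqrt (tr x t ^ 2 + tz1 x t ^ 2 + tz2 x t ^ 2 + td x t ^ 2).

Definition is_solution (w0 a wd h H t0 : R) (x : traj) : Prop :=
  (forall t, t0 < t ->
     is_derive (tr x) t (f_r w0 a h H (tr x t) (tz1 x t) (tz2 x t) (td x t)) /\
     is_derive (tz1 x) t (f_z1 w0 a (tz1 x t) (tz2 x t) (td x t)) /\
     is_derive (tz2 x) t (f_z2 w0 a (tz1 x t) (tz2 x t) (td x t)) /\
     is_derive (td x) t (f_d wd (td x t))) /\
  filterlim (tr x) (at_right t0) (locally (tr x t0)) /\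
  filterlim (tz1 x) (at_right t0) (locally (tz1 x t0)) /\
  filterlim (tz2 x) (at_right t0) (locally (tz2 x t0)) /\
  filterlim (td x) (at_right t0) (locally (td x t0)).

(* Global uniform asymptotic stability of the origin (Khalil, Def. 4.4):
   solutions exist for all forward time, the origin is uniformly stable
   with a class-K delta that can be taken radially unbounded (equivalently:
   solutions are uniformly globally bounded), and it is globally
   uniformly attractive. *)
Definition GUAS (w0 a wd h H : R) : Prop :=
  (forall t0 r0 z10 z20 d0, 0 <= t0 ->
     exists x, is_solution w0 a wd h H t0 x /\
       tr x t0 = r0 /\ tz1 x t0 = z10 /\ tz2 x t0 = z20 /\ td x t0 = d0) /\
  (forall eps, 0 < eps -> exists delta, 0 < delta /\
     forall t0 x, 0 <= t0 -> is_solution w0 a wd h H t0 x ->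
       nrm x t0 < delta -> forall t, t0 <= t -> nrm x t < eps) /\
  (forall c, 0 < c -> exists b, 0 < b /\
     forall t0 x, 0 <= t0 -> is_solution w0 a wd h H t0 x ->
       nrm x t0 < c -> forall t, t0 <= t -> nrm x t < b) /\
  (forall eta c, 0 < eta -> 0 < c -> exists T, 0 <= T /\
     forall t0 x, 0 <= t0 -> is_solution w0 a wd h H t0 x ->
       nrm x t0 < c -> forall t, t0 + T <= t -> nrm x t < eta).

(* Main.v *)
Require Import Defs.
From Stdlib Require Import Reals Lra Lia FunctionalExtensionality Factorial.
From Coquelicot Require Import Coquelicot.
Open Scope R_scope.

Definition RD (s : R) (f f' : R -> R) : Prop :=
  (forall t, s < t -> is_derive f t (f' t)) /\
  filterlim f (at_right s) (locally (f s)).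

Lemma at_right_le s : filter_le (at_right s) (locally s).
Proof. intros P HP. unfold at_right, within. revert HP; apply filter_imp. auto. Qed.

Lemma RD_cont s f f' : (forall t, s < t -> is_derive f t (f' t)) ->
  continuous f s -> RD s f f'.
Proof. intros H1 H2; split; auto. eapply filterlim_filter_le_1; [apply at_right_le|exact H2]. Qed.

Lemma RD_plus s f f' g g' : RD s f f' -> RD s g g' ->
  RD s (fun t => f t + g t) (fun t => f' t + g' t).
Proof.
  intros [A1 A2] [B1 B2]; split.
  - intros t Ht. apply (is_derive_plus f g t (f' t) (g' t)); auto.
  - apply (filterlim_comp_2 f g Rplus A2 B2).
    apply (filterlim_plus (K:=R_AbsRing) (V:=R_NormedModule) (f s) (g s)).
Qed.

Lemma RD_mult s f f' g g' : RD s f f' -> RD s g g' ->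
  RD s (fun t => f t * g t) (fun t => f' t * g t + f t * g' t).
Proof.
  intros [A1 A2] [B1 B2]; split.
  - intros t Ht. apply (is_derive_mult f g t (f' t) (g' t)); auto.
    intros; apply Rmult_comm.
  - apply (filterlim_comp_2 f g Rmult A2 B2).
    apply (filterlim_mult (K:=R_AbsRing) (f s) (g s)).
Qed.

Lemma RD_const s c : RD s (fun _ => c) (fun _ => 0).
Proof. split. intros; apply (is_derive_const c t). apply filterlim_const. Qed.

Lemma RD_ext s f f' g g' : RD s f f' -> (forall t, f t = g t) -> (forall t, f' t = g' t) -> RD s g g'.
Proof.
  intros [A1 A2] E1 E2. assert (f = g) by (apply functional_extensionality; auto).
  subst. split; auto. intros t Ht. rewrite <- E2; auto.
Qed.

Lemma RD_noninc s g g' : RD s g g' -> (forall t, s < t -> g' t <= 0) ->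
  forall t, s <= t -> g t <= g s.
Proof.
  intros [A1 A2] Hneg.
  assert (Hmid : forall u t, s < u -> u <= t -> g t <= g u).
  { intros u t Hu Hut. destruct (Req_dec u t) as [->|Hne]; [lra|].
    destruct (MVT_gen g u t g') as [c [Hc E]].
    - intros x Hx. apply A1. rewrite Rmin_left in Hx by lra. lra.
    - intros x Hx. rewrite Rmin_left in Hx by lra. rewrite Rmax_right in Hx by lra.
      apply derivable_continuous_pt. exists (g' x). apply is_derive_Reals. apply A1; lra.
    - rewrite Rmin_left in Hc by lra. rewrite Rmax_right in Hc by lra.
      assert (g' c <= 0) by (apply Hneg; lra). nra. }
  intros t Ht. destruct (Req_dec s t) as [<-|Hne]; [lra|].
  destruct (Rle_or_lt (g t) (g s)) as [|Hlt]; auto.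
  exfalso. assert (Hp : 0 < g t - g s) by lra.
  specialize (A2 (ball (g s) (mkposreal _ Hp)) (locally_ball _ _)).
  destruct A2 as [del Hdel].
  set (u := s + Rmin (del/2) (t - s)).
  assert (Hu1 : s < u). { unfold u. apply Rmin_case; destruct del; simpl; lra. }
  assert (Hu2 : u <= t). { unfold u. generalize (Rmin_r (del/2) (t-s)); lra. }
  assert (Hb : ball s del u).
  { assert (Hm1 : Rmin (del/2) (t-s) <= del/2) by apply Rmin_l.
    assert (Hdp : 0 < del) by (destruct del; simpl; lra).
    unfold ball; simpl; unfold AbsRing_ball, abs, minus, plus, opp; simpl.
    replace (u + - s) with (u - s) by ring.
    rewrite Rabs_right by lra. unfold u. lra. }
  specialize (Hdel u Hb Hu1). simpl in Hdel.
  unfold ball in Hdel; simpl in Hdel; unfold AbsRing_ball, abs, minus, plus, opp in Hdel; simpl in Hdel.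
  apply Rabs_lt_between in Hdel.
  specialize (Hmid u t Hu1 Hu2). lra.
Qed.

Lemma RD_expk s k : RD s (fun t => exp (k * (t - s))) (fun t => k * exp (k * (t - s))).
Proof.
  apply RD_cont.
  - intros t _. auto_derive. auto. unfold Rminus; ring.
  - apply ex_derive_continuous. auto_derive. auto.
Qed.

Lemma RD_decay s f f' k m : 0 < k -> RD s f f' ->
  (forall t, s < t -> f' t <= - k * f t + m) ->
  forall t, s <= t -> f t <= m / k + (f s - m / k) * exp (- k * (t - s)).
Proof.
  intros Hk Hf Hd t Ht.
  assert (HR := RD_mult _ _ _ _ _ (RD_plus _ _ _ _ _ Hf (RD_const s (- (m/k)))) (RD_expk s k)).
  assert (Hn := RD_noninc _ _ _ HR).
  assert (Hle : (f t + - (m / k)) * exp (k * (t - s)) <= (f s + - (m / k)) * exp (k * (s - s))).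
  { apply Hn; auto. intros u Hu. specialize (Hd u Hu).
    assert (0 < exp (k * (u - s))) by apply exp_pos.
    replace ((f' u + 0) * exp (k * (u - s)) + (f u + - (m / k)) * (k * exp (k * (u - s))))
      with ((f' u + k * f u - m) * exp (k * (u - s))) by (field; lra).
    assert (f' u + k * f u - m <= 0) by lra. nra. }
  replace (k * (s - s)) with 0 in Hle by ring. rewrite exp_0 in Hle.
  assert (He : exp (k * (t - s)) * exp (- k * (t - s)) = 1).
  { rewrite <- exp_plus. replace (k * (t - s) + - k * (t - s)) with 0 by ring. apply exp_0. }
  assert (0 < exp (- k * (t - s))) by apply exp_pos.
  assert (Hm := Rmult_le_compat_r _ _ _ (Rlt_le _ _ H) Hle).
  replace ((f t + - (m / k)) * exp (k * (t - s)) * exp (- k * (t - s))) with (f t + - (m/k)) in Hm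
    by (rewrite Rmult_assoc, He; ring).
  lra.
Qed.

Lemma f_r_eq w0 a h H r z1 z2 d :
  f_r w0 a h H r z1 z2 d = - h * r + H * (- (a/2) * exp d * (z2 * z2)).
Proof. unfold f_r, qform. ring. Qed.
Lemma f_z1_eq w0 a z1 z2 d : f_z1 w0 a z1 z2 d = w0 * z2.
Proof. unfold f_z1. ring. Qed.
Lemma f_z2_eq w0 a z1 z2 d : f_z2 w0 a z1 z2 d = - w0 * z1 - (a/2) * exp d * z2.
Proof. unfold f_z2. ring. Qed.

Lemma sol_RD w0 a wd h H t0 x : is_solution w0 a wd h H t0 x ->
  RD t0 (tr x) (fun t => - h * tr x t + H * (- (a/2) * exp (td x t) * (tz2 x t * tz2 x t))) /\
  RD t0 (tz1 x) (fun t => w0 * tz2 x t) /\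
  RD t0 (tz2 x) (fun t => - w0 * tz1 x t - (a/2) * exp (td x t) * tz2 x t) /\
  RD t0 (td x) (fun t => - wd * (exp (td x t) - 1)).
Proof.
  intros [D [C1 [C2 [C3 C4]]]].
  split; [split; [intros t Ht; destruct (D t Ht) as [E1 _]; rewrite <- (f_r_eq w0 a h H (tr x t) (tz1 x t) (tz2 x t) (td x t)); exact E1|exact C1]|].
  split; [split; [intros t Ht; destruct (D t Ht) as [_ [E1 _]]; rewrite <- (f_z1_eq w0 a (tz1 x t) (tz2 x t) (td x t)); exact E1|exact C2]|].
  split; [split; [intros t Ht; destruct (D t Ht) as [_ [_ [E1 _]]]; rewrite <- (f_z2_eq w0 a (tz1 x t) (tz2 x t) (td x t)); exact E1|exact C3]|].
  split; [intros t Ht; destruct (D t Ht) as [_ [_ [_ E1]]]; exact E1|exact C4].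
Qed.

Lemma RD_shift t0 s f f' : RD t0 f f' -> t0 <= s -> RD s f f'.
Proof.
  intros [A1 A2] Hs. destruct (Req_dec t0 s) as [<-|Hne]; [split; auto|].
  apply RD_cont. intros; apply A1; lra.
  apply ex_derive_continuous. exists (f' s). apply A1; lra.
Qed.

Lemma d_exp_ineq c d : -c <= d <= c -> exp (- c) * (d * d) <= d * (exp d - 1).
Proof.
  intros [H1 H2]. destruct (Rle_or_lt 0 d) as [Hd|Hd].
  - assert (exp (-c) <= 1). { rewrite <- exp_0. destruct (Req_dec c 0) as [->|].
      rewrite Ropp_0; lra. left; apply exp_increasing; lra. }
    generalize (exp_ineq1_le d). nra.
  - assert (Hed : exp (-c) <= exp d). { destruct (Req_dec d (-c)) as [->|]; [lra|].
      left; apply exp_increasing; lra. }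
    assert (Hx := exp_ineq1_le (- d)).
    assert (Hm : exp d * exp (- d) = 1) by (rewrite <- exp_plus; replace (d + - d) with 0 by ring; apply exp_0).
    assert (0 < exp d) by apply exp_pos.
    assert (1 - exp d >= - d * exp d) by nra.
    nra.
Qed.

Lemma d_exp_nonneg d : 0 <= d * (exp d - 1).
Proof.
  destruct (Rle_or_lt 0 d) as [Hd|Hd]. generalize (exp_ineq1_le d); nra.
  assert (exp d < 1) by (rewrite <- exp_0; apply exp_increasing; lra). nra.
Qed.

Lemma d_noninc w0 a wd h H t0 x : 0 < wd -> is_solution w0 a wd h H t0 x ->
  forall t, t0 <= t -> td x t * td x t <= td x t0 * td x t0.
Proof.
  intros Hwd Hs. destruct (sol_RD _ _ _ _ _ _ _ Hs) as [_ [_ [_ Hd]]].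
  apply (RD_noninc _ _ _ (RD_mult _ _ _ _ _ Hd Hd)).
  intros t Ht. assert (0 <= wd * (td x t * (exp (td x t) - 1))) by (apply Rmult_le_pos; [lra|apply d_exp_nonneg]). nra.
Qed.

Lemma d_range w0 a wd h H t0 x c : 0 < wd -> is_solution w0 a wd h H t0 x ->
  Rabs (td x t0) <= c -> forall t, t0 <= t -> - c <= td x t <= c.
Proof.
  intros Hwd Hs Hc t Ht. generalize (d_noninc _ _ _ _ _ _ _ Hwd Hs t Ht). intros Hle.
  apply Rabs_le_between. apply Rle_trans with (Rabs (td x t0)); auto.
  apply Rsqr_le_abs_0. unfold Rsqr. auto.
Qed.

Lemma d_decay w0 a wd h H t0 x c : 0 < wd -> is_solution w0 a wd h H t0 x ->
  Rabs (td x t0) <= c -> forall t, t0 <= t ->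
  td x t * td x t <= td x t0 * td x t0 * exp (- (2 * wd * exp (- c)) * (t - t0)).
Proof.
  intros Hwd Hs Hc. destruct (sol_RD _ _ _ _ _ _ _ Hs) as [_ [_ [_ Hd]]].
  intros t Ht.
  assert (Hk : 0 < 2 * wd * exp (- c)) by (generalize (exp_pos (-c)); nra).
  assert (HH := RD_decay _ _ _ (2 * wd * exp (- c)) 0 Hk (RD_mult _ _ _ _ _ Hd Hd)).
  replace (0 / (2 * wd * exp (- c))) with 0 in HH by (unfold Rdiv; ring).
  assert (HH2 : td x t * td x t <= 0 + (td x t0 * td x t0 - 0) * exp (- (2 * wd * exp (- c)) * (t - t0))).
  { apply HH; auto. intros u Hu.
    assert (Hr := d_range _ _ _ _ _ _ _ _ Hwd Hs Hc u (Rlt_le _ _ Hu)).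
    generalize (d_exp_ineq c (td x u) Hr). nra. }
  lra.
Qed.

Lemma W_ineq w0 a e b m Mb p q : 0 < w0 -> 0 < a -> 0 < e <= 1 -> 0 < m -> m <= b <= Mb ->
  e * (w0 + a^2 * Mb^2 / (8 * w0)) <= a * m / 2 ->
  (w0 * q) * p + p * (w0 * q) + ((- w0 * p - (a/2) * b * q) * q + q * (- w0 * p - (a/2) * b * q))
   + (0 * (p * q) + e * ((w0 * q) * q + p * (- w0 * p - (a/2) * b * q)))
  <= - (2/3 * Rmin (e * w0 / 2) (a * m / 2)) * (p * p + q * q + e * (p * q)).
Proof.
  intros Hw Ha He Hm Hb Hc.
  set (k := Rmin (e * w0 / 2) (a * m / 2)).
  assert (Hk1 : k <= e * w0 / 2) by apply Rmin_l.
  assert (Hk2 : k <= a * m / 2) by apply Rmin_r.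
  assert (Hk0 : 0 < k) by (unfold k; apply Rmin_case; nra).
  assert (HS : 0 <= w0 / 2 * (p + a * b / (2 * w0) * q) ^ 2).
  { apply Rmult_le_pos; [lra| apply pow2_ge_0]. }
  assert (Hid : - e * (a/2) * b * (p * q) = - e * (w0 / 2 * (p + a * b / (2 * w0) * q) ^ 2)
            + e * (w0/2) * (p*p) + e * (a^2 * b^2 / (8 * w0)) * (q*q)) by (field; lra).
  assert (Hb2 : a^2 * b^2 / (8 * w0) <= a^2 * Mb^2 / (8 * w0)).
  { unfold Rdiv. apply Rmult_le_compat_r. left; apply Rinv_0_lt_compat; lra.
    apply Rmult_le_compat_l. nra. nra. }
  assert (Hcoef : e * w0 + e * (a^2 * b^2 / (8 * w0)) <= a * b / 2).
  { assert (e * (a ^ 2 * b ^ 2 / (8 * w0)) <= e * (a ^ 2 * Mb ^ 2 / (8 * w0))) by (apply Rmult_le_compat_l; lra).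
    nra. }
  assert (HL : (w0 * q) * p + p * (w0 * q) + ((- w0 * p - (a/2) * b * q) * q + q * (- w0 * p - (a/2) * b * q))
   + (0 * (p * q) + e * ((w0 * q) * q + p * (- w0 * p - (a/2) * b * q)))
   <= - (e * w0 / 2) * (p * p) - (a * b / 2) * (q * q)).
  { assert (Hq : 0 <= q * q) by nra.
    assert (e * w0 + e * (a ^ 2 * b ^ 2 / (8 * w0)) - a * b / 2 <= 0) by lra.
    assert (HH : (e * w0 + e * (a ^ 2 * b ^ 2 / (8 * w0)) - a * b / 2) * (q*q) <= 0) by nra.
    assert (0 <= e * (w0 / 2 * (p + a * b / (2 * w0) * q) ^ 2)) by nra.
    nra. }
  assert (Hpp : 0 <= p * p) by nra. assert (Hqq : 0 <= q * q) by nra.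
  assert (Hpq : e * (p * q) <= (p * p + q * q) / 2 ).
  { assert (0 <= (p - q)^2) by apply pow2_ge_0.
    destruct (Rle_or_lt 0 (p*q)); nra. }
  assert (Hbm : a * m / 2 <= a * b / 2) by nra.
  assert (- (e * w0 / 2) * (p * p) - (a * b / 2) * (q * q) <= - k * (p*p + q*q)) by nra.
  assert (Hkw : - k * (p*p + q*q) <= - (2/3 * k) * (p * p + q * q + e * (p * q))) by nra.
  lra.
Qed.

Lemma E_noninc w0 a wd h H t0 x : 0 < a -> is_solution w0 a wd h H t0 x ->
  forall t, t0 <= t -> tz1 x t * tz1 x t + tz2 x t * tz2 x t <= tz1 x t0 * tz1 x t0 + tz2 x t0 * tz2 x t0.
Proof.
  intros Ha Hs. destruct (sol_RD _ _ _ _ _ _ _ Hs) as [_ [H1 [H2 _]]].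
  apply (RD_noninc _ _ _ (RD_plus _ _ _ _ _ (RD_mult _ _ _ _ _ H1 H1) (RD_mult _ _ _ _ _ H2 H2))).
  intros t Ht. assert (0 < exp (td x t)) by apply exp_pos.
  assert (0 <= a * exp (td x t) * (tz2 x t * tz2 x t)).
  { apply Rmult_le_pos. nra. nra. }
  nra.
Qed.

Definition e_c (w0 a c : R) := Rmin 1 (a * exp (- c) / (2 * (w0 + a^2 * exp c ^ 2 / (8 * w0)))).
Definition kz (w0 a c : R) := 2/3 * Rmin (e_c w0 a c * w0 / 2) (a * exp (- c) / 2).

Lemma kz_pos w0 a c : 0 < w0 -> 0 < a -> 0 < kz w0 a c.
Proof.
  intros Hw Ha. unfold kz, e_c.
  assert (0 < exp (-c)) by apply exp_pos. assert (0 < exp c) by apply exp_pos.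
  assert (0 < a ^ 2 * exp c ^ 2 / (8 * w0)) by (apply Rdiv_lt_0_compat; [apply Rmult_lt_0_compat; apply pow_lt; lra| lra]).
  assert (0 < a * exp (- c) / (2 * (w0 + a ^ 2 * exp c ^ 2 / (8 * w0)))) by (apply Rdiv_lt_0_compat; nra).
  set (X := a * exp (- c) / (2 * (w0 + a ^ 2 * exp c ^ 2 / (8 * w0)))) in *.
  assert (0 < Rmin 1 X) by (apply Rmin_case; lra).
  assert (0 < Rmin 1 X * w0 / 2) by (apply Rdiv_lt_0_compat; nra).
  assert (0 < a * exp (- c) / 2) by (apply Rdiv_lt_0_compat; nra).
  apply Rmult_lt_0_compat; [lra|]. apply Rmin_case; lra.
Qed.

Lemma z_decay w0 a wd h H t0 x c : 0 < w0 -> 0 < a -> 0 < wd -> is_solution w0 a wd h H t0 x ->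
  Rabs (td x t0) <= c -> forall t, t0 <= t ->
  tz1 x t * tz1 x t + tz2 x t * tz2 x t <=
    3 * (tz1 x t0 * tz1 x t0 + tz2 x t0 * tz2 x t0) * exp (- kz w0 a c * (t - t0)).
Proof.
  intros Hw Ha Hwd Hs Hc. destruct (sol_RD _ _ _ _ _ _ _ Hs) as [_ [H1 [H2 _]]].
  set (e := e_c w0 a c).
  assert (Hm : 0 < exp (-c)) by apply exp_pos. assert (HM : 0 < exp c) by apply exp_pos.
  assert (HX : 0 < w0 + a ^ 2 * exp c ^ 2 / (8 * w0)).
  { assert (0 < a ^ 2 * exp c ^ 2 / (8 * w0)) by (apply Rdiv_lt_0_compat; [apply Rmult_lt_0_compat; apply pow_lt; lra| lra]). lra. }
  assert (Hq : 0 < a * exp (- c) / (2 * (w0 + a ^ 2 * exp c ^ 2 / (8 * w0)))) by (apply Rdiv_lt_0_compat; nra).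
  assert (He1 : 0 < e <= 1). { unfold e, e_c. split. apply Rmin_case; lra. apply Rmin_l. }
  assert (He2 : e * (w0 + a ^ 2 * exp c ^ 2 / (8 * w0)) <= a * exp (- c) / 2).
  { assert (e <= a * exp (- c) / (2 * (w0 + a ^ 2 * exp c ^ 2 / (8 * w0)))) by (unfold e, e_c; apply Rmin_r).
    apply Rle_trans with (a * exp (- c) / (2 * (w0 + a ^ 2 * exp c ^ 2 / (8 * w0))) * (w0 + a ^ 2 * exp c ^ 2 / (8 * w0))).
    apply Rmult_le_compat_r; lra. right. set (X := w0 + a ^ 2 * exp c ^ 2 / (8 * w0)) in *. field; lra. }
  assert (Hk := kz_pos w0 a c Hw Ha).
  assert (HR := RD_plus _ _ _ _ _ (RD_plus _ _ _ _ _ (RD_mult _ _ _ _ _ H1 H1) (RD_mult _ _ _ _ _ H2 H2))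
                  (RD_mult _ _ _ _ _ (RD_const t0 e) (RD_mult _ _ _ _ _ H1 H2))).
  assert (HD := RD_decay _ _ _ (kz w0 a c) 0 Hk HR).
  replace (0 / kz w0 a c) with 0 in HD by (unfold Rdiv; ring).
  intros t Ht.
  assert (HW : tz1 x t * tz1 x t + tz2 x t * tz2 x t + e * (tz1 x t * tz2 x t) <=
     0 + (tz1 x t0 * tz1 x t0 + tz2 x t0 * tz2 x t0 + e * (tz1 x t0 * tz2 x t0) - 0) * exp (- kz w0 a c * (t - t0))).
  { apply HD; auto. intros u Hu.
    destruct (d_range _ _ _ _ _ _ _ _ Hwd Hs Hc u (Rlt_le _ _ Hu)) as [Hd1 Hd2].
    assert (Hb : exp (-c) <= exp (td x u) <= exp c).
    { split; [destruct (Req_dec (td x u) (-c)) as [->|]; [lra| left; apply exp_increasing; lra]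
             |destruct (Req_dec (td x u) c) as [->|]; [lra| left; apply exp_increasing; lra]]. }
    assert (HI := W_ineq w0 a e (exp (td x u)) (exp (-c)) (exp c) (tz1 x u) (tz2 x u) Hw Ha He1 Hm Hb He2).
    unfold kz. fold e. lra. }
  set (p := tz1 x t) in *. set (q := tz2 x t) in *. set (p0 := tz1 x t0) in *. set (q0 := tz2 x t0) in *.
  assert (Hex : 0 < exp (- kz w0 a c * (t - t0))) by apply exp_pos.
  assert (L1 : p * p + q * q <= 2 * (p * p + q * q + e * (p * q))).
  { assert (0 <= (p + q)^2) by apply pow2_ge_0. destruct (Rle_or_lt 0 (p*q)); nra. }
  assert (L2 : p0 * p0 + q0 * q0 + e * (p0 * q0) <= 3/2 * (p0 * p0 + q0 * q0)).
  { assert (0 <= (p0 - q0)^2) by apply pow2_ge_0. destruct (Rle_or_lt 0 (p0*q0)); nra. }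
  assert (L3 : (p0 * p0 + q0 * q0 + e * (p0 * q0)) * exp (- kz w0 a c * (t - t0)) <=
               3/2 * (p0 * p0 + q0 * q0) * exp (- kz w0 a c * (t - t0))) by (apply Rmult_le_compat_r; lra).
  lra.
Qed.

Lemma r_bound w0 a wd h H t0 x s Qm : 0 < a -> 0 < h -> 0 < H -> is_solution w0 a wd h H t0 x ->
  t0 <= s -> (forall t, s <= t -> (a/2) * exp (td x t) * (tz2 x t * tz2 x t) <= Qm) ->
  forall t, s <= t -> tr x t * tr x t <=
    H^2 * Qm^2 / h / h + (tr x s * tr x s - H^2 * Qm^2 / h / h) * exp (- h * (t - s)).
Proof.
  intros Ha Hh HH Hs Hts HQ. destruct (sol_RD _ _ _ _ _ _ _ Hs) as [Hr _].
  assert (Hr' := RD_shift _ _ _ _ Hr Hts).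
  apply (RD_decay _ _ _ h (H^2 * Qm^2 / h) Hh (RD_mult _ _ _ _ _ Hr' Hr')).
  intros u Hu. specialize (HQ u (Rlt_le _ _ Hu)).
  set (Q := (a/2) * exp (td x u) * (tz2 x u * tz2 x u)) in *.
  assert (HQ0 : 0 <= Q). { unfold Q. assert (0 < exp (td x u)) by apply exp_pos.
    apply Rmult_le_pos; [nra|nra]. }
  replace (- (a / 2) * exp (td x u) * (tz2 x u * tz2 x u)) with (- Q) by (unfold Q; ring).
  set (r := tr x u).
  assert (Hsq : 0 <= (h * r + H * Q)^2 / h) by (apply Rdiv_le_0_compat; [apply pow2_ge_0|lra]).
  assert (Hsq' : (h * r + H * Q)^2 / h = h * (r * r) + 2 * H * r * Q + H^2 * Q^2 / h) by (field; lra).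
  assert (HQ2 : H^2 * Q^2 / h <= H^2 * Qm^2 / h).
  { unfold Rdiv. apply Rmult_le_compat_r. left; apply Rinv_0_lt_compat; lra.
    apply Rmult_le_compat_l. nra. nra. }
  nra.
Qed.

Definition S4 (x : traj) t := tr x t * tr x t + tz1 x t * tz1 x t + tz2 x t * tz2 x t + td x t * td x t.

Lemma S4_nonneg x t : 0 <= S4 x t.
Proof. unfold S4. nra. Qed.

Lemma nrm_S4 x t : nrm x t = sqrt (S4 x t).
Proof. unfold nrm, S4. f_equal. ring. Qed.

Lemma sqrt_lt_help X e : 0 <= X -> 0 < e -> X < e * e -> sqrt X < e.
Proof.
  intros H0 He Hx. rewrite <- (sqrt_square e) by lra. apply sqrt_lt_1_alt; lra.
Qed.

Lemma S4_lt x t c : nrm x t < c -> S4 x t < c * c.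
Proof.
  intros Hn. rewrite nrm_S4 in Hn. assert (H0 := S4_nonneg x t).
  assert (0 <= sqrt (S4 x t)) by apply sqrt_pos.
  rewrite <- (sqrt_sqrt (S4 x t)) by auto. nra.
Qed.

Lemma abs_le_of_sq d c : 0 <= c -> d * d <= c * c -> Rabs d <= c.
Proof.
  intros Hc Hd. assert (Hd2 : Rsqr d <= Rsqr c) by (unfold Rsqr; lra). apply Rsqr_le_abs_0 in Hd2. rewrite (Rabs_right c) in Hd2 by lra. auto.
Qed.

Lemma decay_time A l tau : 0 <= A -> 0 < l -> 0 < tau -> forall u, A / (l * tau) <= u -> A * exp (- l * u) < tau.
Proof.
  intros HA Hl Ht u Hu.
  assert (H1 := exp_ineq1_le (l * u)).
  assert (Hlu : A / tau <= l * u).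
  { replace (A / tau) with (l * (A / (l * tau))) by (field; lra). apply Rmult_le_compat_l; lra. }
  assert (HA' : A < tau * exp (l * u)).
  { assert (A / tau * tau = A) by (field; lra). nra. }
  assert (He : exp (l * u) * exp (- l * u) = 1) by (rewrite <- exp_plus; replace (l * u + - l * u) with 0 by ring; apply exp_0).
  assert (0 < exp (- l * u)) by apply exp_pos.
  assert (Hq : A * exp (- l * u) < tau * exp (l * u) * exp (- l * u)) by (apply Rmult_lt_compat_r; auto).
  rewrite Rmult_assoc, He in Hq. lra.
Qed.

Lemma exp_le1 u : u <= 0 -> exp u <= 1.
Proof. intros Hu. rewrite <- exp_0. destruct (Req_dec u 0) as [->|]; [lra|left; apply exp_increasing; lra]. Qed.

Definition Bc (a h H c : R) := c * c + H^2 * ((a/2) * exp c * (c * c))^2 / h / h.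

Lemma global_bound w0 a wd h H t0 x c : 0 < w0 -> 0 < a -> 0 < wd -> 0 < h -> 0 < H ->
  is_solution w0 a wd h H t0 x -> 0 <= c -> S4 x t0 <= c * c ->
  forall t, t0 <= t -> S4 x t <= S4 x t0 + H^2 * ((a/2) * exp c * S4 x t0)^2 / h / h.
Proof.
  intros Hw Ha Hwd Hh HH Hs Hc HS t Ht.
  assert (Hd0 : Rabs (td x t0) <= c).
  { apply abs_le_of_sq; auto. unfold S4 in HS. nra. }
  set (Qm := (a/2) * exp c * S4 x t0).
  assert (HQ : forall u, t0 <= u -> (a/2) * exp (td x u) * (tz2 x u * tz2 x u) <= Qm).
  { intros u Hu. destruct (d_range _ _ _ _ _ _ _ _ Hwd Hs Hd0 u Hu) as [_ Hd2].
    assert (exp (td x u) <= exp c) by (destruct (Req_dec (td x u) c) as [->|]; [lra|left; apply exp_increasing; lra]).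
    assert (HE := E_noninc _ _ _ _ _ _ _ Ha Hs u Hu).
    assert (tz2 x u * tz2 x u <= S4 x t0) by (unfold S4; nra).
    assert (0 < exp (td x u)) by apply exp_pos.
    unfold Qm. apply Rle_trans with ((a/2) * exp c * (tz2 x u * tz2 x u)).
    apply Rmult_le_compat_r; [nra|]. apply Rmult_le_compat_l; lra.
    apply Rmult_le_compat_l; [ assert (0 < exp c) by apply exp_pos; nra | lra]. }
  assert (Hr := r_bound _ _ _ _ _ _ _ t0 Qm Ha Hh HH Hs (Rle_refl _) HQ t Ht).
  assert (Hm : 0 <= H ^ 2 * Qm ^ 2 / h / h).
  { unfold Rdiv. apply Rmult_le_pos; [apply Rmult_le_pos|]; try (left; apply Rinv_0_lt_compat; lra).
    apply Rmult_le_pos; apply pow2_ge_0. }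
  assert (He : exp (- h * (t - t0)) <= 1) by (apply exp_le1; nra).
  assert (He0 : 0 < exp (- h * (t - t0))) by apply exp_pos.
  assert (Hr2 : tr x t * tr x t <= H ^ 2 * Qm ^ 2 / h / h + tr x t0 * tr x t0).
  { destruct (Rle_or_lt 0 (tr x t0 * tr x t0 - H ^ 2 * Qm ^ 2 / h / h)).
    - assert ((tr x t0 * tr x t0 - H ^ 2 * Qm ^ 2 / h / h) * exp (- h * (t - t0)) <= 
              (tr x t0 * tr x t0 - H ^ 2 * Qm ^ 2 / h / h) * 1) by (apply Rmult_le_compat_l; lra). lra.
    - assert ((tr x t0 * tr x t0 - H ^ 2 * Qm ^ 2 / h / h) * exp (- h * (t - t0)) <= 0) by nra.
      assert (0 <= tr x t0 * tr x t0) by nra. lra. }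
  assert (HE := E_noninc _ _ _ _ _ _ _ Ha Hs t Ht).
  assert (HD := d_noninc _ _ _ _ _ _ _ Hwd Hs t Ht).
  unfold S4 in *. lra.
Qed.

Lemma GUAS_stab w0 a wd h H : 0 < w0 -> 0 < a -> 0 < wd -> 0 < h -> 0 < H ->
  forall eps, 0 < eps -> exists delta, 0 < delta /\
     forall t0 x, 0 <= t0 -> is_solution w0 a wd h H t0 x ->
       nrm x t0 < delta -> forall t, t0 <= t -> nrm x t < eps.
Proof.
  intros Hw Ha Hwd Hh HH eps Heps.
  set (K0 := H^2 * ((a/2) * exp 1)^2 / h / h).
  assert (HK0 : 0 <= K0).
  { unfold K0, Rdiv. apply Rmult_le_pos; [apply Rmult_le_pos|]; try (left; apply Rinv_0_lt_compat; lra).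
    apply Rmult_le_pos; apply pow2_ge_0. }
  set (K := 1 + K0).
  exists (Rmin 1 (eps / K)). split.
  { apply Rmin_case; [lra| apply Rdiv_lt_0_compat; unfold K; lra]. }
  intros t0 x _ Hs Hn t Ht.
  set (d := Rmin 1 (eps / K)) in *.
  assert (Hd1 : d <= 1) by apply Rmin_l. assert (Hd2 : d <= eps / K) by apply Rmin_r.
  assert (HS := S4_lt _ _ _ Hn). assert (HS0 := S4_nonneg x t0).
  assert (Hdp : 0 < d) by (unfold d; apply Rmin_case; [lra| apply Rdiv_lt_0_compat; unfold K; lra]).
  assert (HS1 : S4 x t0 <= 1 * 1) by nra.
  assert (HB := global_bound _ _ _ _ _ _ _ 1 Hw Ha Hwd Hh HH Hs ltac:(lra) HS1 t Ht).
  assert (Heq : H ^ 2 * (a / 2 * exp 1 * S4 x t0) ^ 2 / h / h = K0 * (S4 x t0 * S4 x t0)).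
  { unfold K0. field. lra. }
  rewrite Heq in HB.
  assert (HSS : K0 * (S4 x t0 * S4 x t0) <= K0 * S4 x t0).
  { apply Rmult_le_compat_l; auto. nra. }
  assert (HdK : d * d * K <= eps * eps).
  { assert (HK : 0 < K) by (unfold K; lra).
    assert (HeK : eps / K * K = eps) by (field; lra).
    assert (d * K <= eps). { apply Rle_trans with (eps / K * K); [apply Rmult_le_compat_r; lra|lra]. }
    assert (d <= eps) by (assert (d * 1 <= d * K) by (apply Rmult_le_compat_l; unfold K; lra); lra).
    assert (d * (d * K) <= d * eps) by (apply Rmult_le_compat_l; lra).
    assert (d * eps <= eps * eps) by (apply Rmult_le_compat_r; lra). nra. }
  rewrite nrm_S4. apply sqrt_lt_help; [apply S4_nonneg|auto|].
  assert (S4 x t0 * K < d * d * K) by (apply Rmult_lt_compat_r; unfold K; lra).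
  unfold K in *. nra.
Qed.

Lemma GUAS_bdd w0 a wd h H : 0 < w0 -> 0 < a -> 0 < wd -> 0 < h -> 0 < H ->
  forall c, 0 < c -> exists b, 0 < b /\
     forall t0 x, 0 <= t0 -> is_solution w0 a wd h H t0 x ->
       nrm x t0 < c -> forall t, t0 <= t -> nrm x t < b.
Proof.
  intros Hw Ha Hwd Hh HH c Hc.
  assert (HB0 : 0 <= Bc a h H c).
  { unfold Bc. assert (0 <= H ^ 2 * (a / 2 * exp c * (c * c)) ^ 2 / h / h).
    { unfold Rdiv. apply Rmult_le_pos; [apply Rmult_le_pos|]; try (left; apply Rinv_0_lt_compat; lra).
      apply Rmult_le_pos; apply pow2_ge_0. } nra. }
  exists (1 + Bc a h H c). split; [lra|].
  intros t0 x _ Hs Hn t Ht.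
  assert (HS := S4_lt _ _ _ Hn). assert (HS0 := S4_nonneg x t0).
  assert (HB := global_bound _ _ _ _ _ _ _ c Hw Ha Hwd Hh HH Hs ltac:(lra) ltac:(lra) t Ht).
  assert (H2 : H ^ 2 * (a / 2 * exp c * S4 x t0) ^ 2 / h / h <= H ^ 2 * (a / 2 * exp c * (c * c)) ^ 2 / h / h).
  { unfold Rdiv. apply Rmult_le_compat_r; [left; apply Rinv_0_lt_compat; lra|].
    apply Rmult_le_compat_r; [left; apply Rinv_0_lt_compat; lra|].
    apply Rmult_le_compat_l; [apply pow2_ge_0|].
    assert (0 < exp c) by apply exp_pos.
    assert (0 <= a / 2 * exp c * S4 x t0) by (apply Rmult_le_pos; [nra|auto]).
    assert (a / 2 * exp c * S4 x t0 <= a / 2 * exp c * (c * c)) by (apply Rmult_le_compat_l; nra).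
    simpl. nra. }
  rewrite nrm_S4. apply sqrt_lt_help; [apply S4_nonneg|lra|].
  unfold Bc in *. nra.
Qed.

Lemma S_le_Bc w0 a wd h H t0 x c : 0 < w0 -> 0 < a -> 0 < wd -> 0 < h -> 0 < H ->
  is_solution w0 a wd h H t0 x -> nrm x t0 < c -> forall t, t0 <= t -> S4 x t <= Bc a h H c.
Proof.
  intros Hw Ha Hwd Hh HH Hs Hn t Ht.
  assert (HS := S4_lt _ _ _ Hn). assert (HS0 := S4_nonneg x t0).
  assert (Hc : 0 <= c) by (generalize (sqrt_pos (S4 x t0)); rewrite <- nrm_S4; lra).
  assert (HB := global_bound _ _ _ _ _ _ _ c Hw Ha Hwd Hh HH Hs Hc ltac:(lra) t Ht).
  assert (H2 : H ^ 2 * (a / 2 * exp c * S4 x t0) ^ 2 / h / h <= H ^ 2 * (a / 2 * exp c * (c * c)) ^ 2 / h / h).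
  { unfold Rdiv. apply Rmult_le_compat_r; [left; apply Rinv_0_lt_compat; lra|].
    apply Rmult_le_compat_r; [left; apply Rinv_0_lt_compat; lra|].
    apply Rmult_le_compat_l; [apply pow2_ge_0|].
    assert (0 < exp c) by apply exp_pos.
    assert (0 <= a / 2 * exp c * S4 x t0) by (apply Rmult_le_pos; [nra|auto]).
    assert (a / 2 * exp c * S4 x t0 <= a / 2 * exp c * (c * c)) by (apply Rmult_le_compat_l; nra).
    simpl. nra. }
  unfold Bc. lra.
Qed.

Lemma GUAS_attr w0 a wd h H : 0 < w0 -> 0 < a -> 0 < wd -> 0 < h -> 0 < H ->
  forall eta c, 0 < eta -> 0 < c -> exists T, 0 <= T /\
     forall t0 x, 0 <= t0 -> is_solution w0 a wd h H t0 x ->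
       nrm x t0 < c -> forall t, t0 + T <= t -> nrm x t < eta.
Proof.
  intros Hw Ha Hwd Hh HH eta c Heta Hc.
  set (tau := eta * eta / 3).
  assert (Htau : 0 < tau) by (unfold tau; nra).
  set (kd := 2 * wd * exp (- c)).
  assert (Hkd : 0 < kd) by (unfold kd; generalize (exp_pos (- c)); nra).
  set (kzc := kz w0 a c). assert (Hkz : 0 < kzc) by (apply kz_pos; auto).
  set (K2 := H^2 * ((a/2) * exp c)^2 / h / h).
  assert (HK2 : 0 <= K2).
  { unfold K2, Rdiv. apply Rmult_le_pos; [apply Rmult_le_pos|]; try (left; apply Rinv_0_lt_compat; lra).
    apply Rmult_le_pos; apply pow2_ge_0. }
  set (ez := Rmin 1 (tau / (2 * (K2 + 1)))).
  assert (Hez0 : 0 < ez) by (unfold ez; apply Rmin_case; [lra|apply Rdiv_lt_0_compat; lra]).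
  assert (Hez1 : ez <= 1) by apply Rmin_l.
  assert (Hez2 : ez <= tau / (2 * (K2 + 1))) by apply Rmin_r.
  assert (HBc : 0 <= Bc a h H c).
  { unfold Bc. assert (0 <= H ^ 2 * (a / 2 * exp c * (c * c)) ^ 2 / h / h).
    { unfold Rdiv. apply Rmult_le_pos; [apply Rmult_le_pos|]; try (left; apply Rinv_0_lt_compat; lra).
      apply Rmult_le_pos; apply pow2_ge_0. } nra. }
  set (Td := c * c / (kd * tau)).
  set (Tz := 3 * (c * c) / (kzc * tau)).
  set (T1 := 3 * (c * c) / (kzc * ez)).
  set (T2 := Bc a h H c / (h * (tau / 2))).
  assert (HTd : 0 <= Td) by (unfold Td; apply Rdiv_le_0_compat; nra).
  assert (HT1 : 0 <= T1) by (unfold T1; apply Rdiv_le_0_compat; nra).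
  assert (HT2 : 0 <= T2) by (unfold T2; apply Rdiv_le_0_compat; nra).
  exists (Rmax Td (Rmax Tz (T1 + T2))). split.
  { apply Rle_trans with Td; auto. apply Rmax_l. }
  intros t0 x _ Hs Hn t Ht.
  assert (Hm1 : Td <= t - t0). { generalize (Rmax_l Td (Rmax Tz (T1 + T2))). lra. }
  assert (Hm2 : Tz <= t - t0). { generalize (Rmax_r Td (Rmax Tz (T1 + T2))) (Rmax_l Tz (T1 + T2)). lra. }
  assert (Hm3 : T1 + T2 <= t - t0). { generalize (Rmax_r Td (Rmax Tz (T1 + T2))) (Rmax_r Tz (T1 + T2)). lra. }
  assert (HS := S4_lt _ _ _ Hn). assert (HS0 := S4_nonneg x t0).
  assert (Hd0 : Rabs (td x t0) <= c) by (apply abs_le_of_sq; [lra|unfold S4 in HS; nra]).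
  assert (Hdt : td x t * td x t < tau).
  { assert (HD := d_decay _ _ _ _ _ _ _ _ Hwd Hs Hd0 t ltac:(lra)). fold kd in HD.
    assert (HDT := decay_time (c * c) kd tau ltac:(nra) Hkd Htau (t - t0) Hm1).
    assert (td x t0 * td x t0 <= c * c) by (unfold S4 in HS; nra).
    assert (td x t0 * td x t0 * exp (- kd * (t - t0)) <= c * c * exp (- kd * (t - t0)))
      by (apply Rmult_le_compat_r; [left; apply exp_pos|auto]).
    lra. }
  assert (HE0 : tz1 x t0 * tz1 x t0 + tz2 x t0 * tz2 x t0 <= c * c) by (unfold S4 in HS; nra).
  assert (HEb : forall u T', 0 <= T' -> 3 * (c * c) / (kzc * T') <= u - t0 -> 0 < T' ->
                tz1 x u * tz1 x u + tz2 x u * tz2 x u < T').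
  { intros u T' _ Hu HT'. assert (Hut : t0 <= u).
    { assert (0 <= 3 * (c * c) / (kzc * T')) by (apply Rdiv_le_0_compat; nra). lra. }
    assert (HZ := z_decay _ _ _ _ _ _ _ c Hw Ha Hwd Hs Hd0 u Hut). fold kzc in HZ.
    assert (HDT := decay_time (3 * (c * c)) kzc T' ltac:(nra) Hkz HT' (u - t0) Hu).
    assert (3 * (tz1 x t0 * tz1 x t0 + tz2 x t0 * tz2 x t0) * exp (- kzc * (u - t0)) <=
            3 * (c * c) * exp (- kzc * (u - t0))) by (apply Rmult_le_compat_r; [left; apply exp_pos|lra]).
    lra. }
  assert (HEt := HEb t tau ltac:(lra) Hm2 Htau).
  set (s := t0 + T1).
  set (Qm := (a/2) * exp c * ez).
  assert (HQ : forall u, s <= u -> (a/2) * exp (td x u) * (tz2 x u * tz2 x u) <= Qm).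
  { intros u Hu. assert (HEu := HEb u ez ltac:(lra) ltac:(unfold s in Hu; unfold T1 in Hu; lra) Hez0).
    assert (Hut : t0 <= u) by (unfold s in Hu; lra).
    destruct (d_range _ _ _ _ _ _ _ _ Hwd Hs Hd0 u Hut) as [_ Hd2].
    assert (exp (td x u) <= exp c) by (destruct (Req_dec (td x u) c) as [->|]; [lra|left; apply exp_increasing; lra]).
    assert (0 < exp (td x u)) by apply exp_pos.
    unfold Qm. apply Rle_trans with ((a/2) * exp c * (tz2 x u * tz2 x u)).
    apply Rmult_le_compat_r; [nra|]. apply Rmult_le_compat_l; lra.
    apply Rmult_le_compat_l; [ assert (0 < exp c) by apply exp_pos; nra | nra]. }
  assert (Hr := r_bound _ _ _ _ _ _ _ s Qm Ha Hh HH Hs ltac:(unfold s; lra) HQ t ltac:(unfold s; lra)).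
  assert (Hm' : H ^ 2 * Qm ^ 2 / h / h = K2 * (ez * ez)) by (unfold K2, Qm; field; lra).
  rewrite Hm' in Hr.
  assert (Hm'2 : K2 * (ez * ez) < tau / 2).
  { assert (K2 * (ez * ez) <= K2 * ez) by (apply Rmult_le_compat_l; nra).
    assert (K2 * ez <= K2 * (tau / (2 * (K2 + 1)))) by (apply Rmult_le_compat_l; lra).
    assert (K2 * (tau / (2 * (K2 + 1))) < tau / 2).
    { apply Rmult_lt_reg_r with (2 * (K2 + 1)); [lra|].
      replace (K2 * (tau / (2 * (K2 + 1))) * (2 * (K2 + 1))) with (K2 * tau) by (field; lra).
      replace (tau / 2 * (2 * (K2 + 1))) with (tau * K2 + tau) by field. lra. }
    lra. }
  assert (Hrs : tr x s * tr x s <= Bc a h H c).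
  { assert (HSs := S_le_Bc _ _ _ _ _ _ _ c Hw Ha Hwd Hh HH Hs Hn s ltac:(unfold s; lra)).
    unfold S4 in HSs. nra. }
  assert (HDT := decay_time (Bc a h H c) h (tau / 2) HBc Hh ltac:(lra) (t - s) ltac:(unfold s, T2 in *; lra)).
  assert (He0 : 0 < exp (- h * (t - s))) by apply exp_pos.
  assert (He1 : exp (- h * (t - s)) <= 1) by (apply exp_le1; unfold s; nra).
  assert (tr x s * tr x s * exp (- h * (t - s)) <= Bc a h H c * exp (- h * (t - s)))
    by (apply Rmult_le_compat_r; lra).
  assert (0 <= K2 * (ez * ez)) by (apply Rmult_le_pos; nra).
  assert (Hrt : tr x t * tr x t < tau).
  { assert (K2 * (ez * ez) * exp (- h * (t - s)) >= 0) by nra. nra. }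
  rewrite nrm_S4. apply sqrt_lt_help; [apply S4_nonneg|lra|].
  unfold S4. unfold tau in *. lra.
Qed.

Lemma cont_plus (f g : R -> R) (x : R) : continuous f x -> continuous g x -> continuous (fun t => f t + g t) x.
Proof. intros; apply (continuous_plus (V:=R_NormedModule) f g); auto. Qed.
Lemma cont_mult (f g : R -> R) (x : R) : continuous f x -> continuous g x -> continuous (fun t => f t * g t) x.
Proof. intros; apply (continuous_mult (K:=R_AbsRing) f g); auto. Qed.
Lemma cont_const (c x : R) : continuous (fun _ : R => c) x.
Proof. apply continuous_const. Qed.
Lemma cont_id (x : R) : continuous (fun t : R => t) x.
Proof. apply continuous_id. Qed.
Lemma cont_opp (f : R -> R) (x : R) : continuous f x -> continuous (fun t => - f t) x.
Proof. intros; apply (continuous_opp (V:=R_NormedModule) f); auto. Qed.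
Lemma cont_comp (f g : R -> R) x : continuous f x -> continuous g (f x) -> continuous (fun t => g (f t)) x.
Proof. intros; apply (continuous_comp f g); auto. Qed.
Lemma cont_ext (f g : R -> R) x : (forall t, f t = g t) -> continuous f x -> continuous g x.
Proof. intros E Hc. assert (f = g) by (apply functional_extensionality; auto). subst; auto. Qed.

Lemma cont_rmax (t0 x : R) : continuous (fun t => Rmax t t0) x.
Proof.
  apply cont_ext with (fun t => (t + t0 + Rabs (t - t0)) * / 2).
  { intros t. unfold Rmax. destruct (Rle_dec t t0).
    rewrite Rabs_left1 by lra. field. rewrite Rabs_right by lra. field. }
  apply cont_mult; [|apply cont_const].
  apply cont_plus. apply cont_plus; [apply cont_id|apply cont_const].
  apply continuous_Rabs_comp. apply cont_plus; [apply cont_id|apply cont_const].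
Qed.

Lemma rmax_loc t0 t : t0 < t -> locally t (fun s => Rmax s t0 = s).
Proof.
  intros Ht. assert (Hp : 0 < t - t0) by lra. exists (mkposreal _ Hp). intros y Hy.
  unfold ball in Hy; simpl in Hy; unfold AbsRing_ball, abs, minus, plus, opp in Hy; simpl in Hy.
  apply Rabs_lt_between in Hy. apply Rmax_left. lra.
Qed.

Definition uu (wd t0 d0 t : R) := 1 + (exp (- d0) - 1) * exp (- wd * (Rmax t t0 - t0)).
Definition Dsol (wd t0 d0 t : R) := - ln (uu wd t0 d0 t).

Lemma uu_pos wd t0 d0 t : 0 < wd -> 0 < uu wd t0 d0 t.
Proof.
  intros Hwd. unfold uu. assert (Hm : t0 <= Rmax t t0) by apply Rmax_r.
  assert (He : exp (- wd * (Rmax t t0 - t0)) <= 1).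
  { rewrite <- exp_0. destruct (Req_dec (- wd * (Rmax t t0 - t0)) 0) as [->|]; [lra|].
    left; apply exp_increasing. nra. }
  assert (0 < exp (- wd * (Rmax t t0 - t0))) by apply exp_pos.
  assert (0 < exp (- d0)) by apply exp_pos.
  destruct (Rle_or_lt 0 (exp (- d0) - 1)). nra. nra.
Qed.

Lemma exp_Dsol wd t0 d0 t : 0 < wd -> exp (Dsol wd t0 d0 t) = / uu wd t0 d0 t.
Proof. intros Hwd. unfold Dsol. rewrite exp_Ropp, exp_ln; auto. apply uu_pos; auto. Qed.

Lemma exp_Dsol_le wd t0 d0 t : 0 < wd -> exp (Dsol wd t0 d0 t) <= 1 + exp d0.
Proof.
  intros Hwd. rewrite exp_Dsol by auto. assert (Hu := uu_pos wd t0 d0 t Hwd).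
  unfold uu in *. assert (Hm : t0 <= Rmax t t0) by apply Rmax_r.
  set (e := exp (- wd * (Rmax t t0 - t0))) in *.
  assert (He : e <= 1).
  { unfold e. rewrite <- exp_0. destruct (Req_dec (- wd * (Rmax t t0 - t0)) 0) as [->|]; [lra|].
    left; apply exp_increasing. nra. }
  assert (0 < e) by apply exp_pos.
  assert (Hd : exp (- d0) * exp d0 = 1) by (rewrite <- exp_plus; replace (- d0 + d0) with 0 by ring; apply exp_0).
  assert (0 < exp (- d0)) by apply exp_pos. assert (0 < exp d0) by apply exp_pos.
  destruct (Rle_or_lt 0 (exp (- d0) - 1)).
  - assert (1 <= 1 + (exp (- d0) - 1) * e) by nra.
    assert (/ (1 + (exp (- d0) - 1) * e) <= 1). { rewrite <- Rinv_1. apply Rinv_le_contravar; lra. }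
    lra.
  - assert (exp (- d0) <= 1 + (exp (- d0) - 1) * e) by nra.
    assert (Hq : / (1 + (exp (- d0) - 1) * e) <= / exp (- d0)) by (apply Rinv_le_contravar; lra).
    assert (Hi : / exp (- d0) = exp d0) by (rewrite exp_Ropp, Rinv_inv; auto).
    rewrite Hi in Hq. lra.
Qed.

Lemma Dsol_t0 wd t0 d0 : Dsol wd t0 d0 t0 = d0.
Proof.
  unfold Dsol, uu. rewrite Rmax_left by lra. replace (- wd * (t0 - t0)) with 0 by ring.
  rewrite exp_0. replace (1 + (exp (- d0) - 1) * 1) with (exp (- d0)) by ring.
  rewrite ln_exp. ring.
Qed.

Lemma Dsol_cont wd t0 d0 x : 0 < wd -> continuous (Dsol wd t0 d0) x.
Proof.
  intros Hwd. unfold Dsol. apply cont_opp.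
  apply cont_comp with (g := ln). 2: { apply continuous_ln. apply uu_pos; auto. }
  unfold uu. apply cont_plus; [apply cont_const|]. apply cont_mult; [apply cont_const|].
  apply continuous_exp_comp. apply cont_mult; [apply cont_const|].
  apply cont_plus; [apply cont_rmax|apply cont_const].
Qed.

Lemma Dsol_deriv wd t0 d0 t : 0 < wd -> t0 < t ->
  is_derive (Dsol wd t0 d0) t (- wd * (exp (Dsol wd t0 d0 t) - 1)).
Proof.
  intros Hwd Ht.
  apply is_derive_ext_loc with (fun s => - ln (1 + (exp (- d0) - 1) * exp (- wd * (s - t0)))).
  { generalize (rmax_loc t0 t Ht). apply filter_imp. intros s Hs. unfold Dsol, uu. rewrite Hs. auto. }
  rewrite exp_Dsol by auto. assert (Hu := uu_pos wd t0 d0 t Hwd). unfold uu in *.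
  rewrite Rmax_left in * by lra.
  unfold Rminus in *. auto_derive. lra. field. lra.
Qed.

Lemma INT_deriv (F : R -> R) t0 b : (forall x, continuous F x) ->
  is_derive (fun b => RInt F t0 b) b (F b).
Proof.
  intros HF. apply (is_derive_RInt F (fun b => RInt F t0 b) t0 b); auto.
  exists (mkposreal 1 Rlt_0_1). intros y _. apply (RInt_correct (V:=R_CompleteNormedModule)). apply (ex_RInt_continuous (V:=R_CompleteNormedModule)). auto.
Qed.

Lemma cont_of_derive (f : R -> R) x l : is_derive f x l -> continuous f x.
Proof. intros Hd. apply (ex_derive_continuous (K:=R_AbsRing) (V:=R_NormedModule)). exists l; auto. Qed.

Lemma INT_cont (F : R -> R) t0 x : (forall x, continuous F x) ->
  continuous (fun t => RInt F t0 (Rmax t t0)) x.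
Proof.
  intros HF. apply cont_comp with (f := fun t => Rmax t t0) (g := fun b => RInt F t0 b).
  apply cont_rmax. eapply cont_of_derive. apply INT_deriv; auto.
Qed.

Lemma INT_deriv2 (F : R -> R) t0 t : (forall x, continuous F x) -> t0 < t ->
  is_derive (fun t => RInt F t0 (Rmax t t0)) t (F t).
Proof.
  intros HF Ht. apply is_derive_ext_loc with (fun b => RInt F t0 b).
  { generalize (rmax_loc t0 t Ht). apply filter_imp. intros s Hs. rewrite Hs; auto. }
  apply INT_deriv; auto.
Qed.

Lemma INT_poly C n t0 t : t0 <= t ->
  RInt (fun s => C * (s - t0) ^ n) t0 t = C * (t - t0) ^ (S n) / INR (S n).
Proof.
  intros Ht. apply is_RInt_unique.
  assert (HH := is_RInt_derive (fun s => C * (s - t0) ^ (S n) / INR (S n)) (fun s => C * (s - t0) ^ n) t0 t).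
  replace (C * (t - t0) ^ S n / INR (S n)) with
    (minus (C * (t - t0) ^ S n / INR (S n)) (C * (t0 - t0) ^ S n / INR (S n))).
  2: { assert (HS : INR (S n) <> 0) by (apply not_0_INR; lia). set (k := INR (S n)) in *. replace (t0 - t0) with 0 by ring. rewrite pow_i by lia. unfold minus, plus, opp; simpl. field. auto. }
  apply HH.
  - intros x _. assert (HS : INR (S n) <> 0) by (apply not_0_INR; lia).
    assert (Hd := is_derive_pow (fun s => s - t0) (S n) x 1 ltac:(auto_derive; auto; ring)).
    assert (Hd2 := is_derive_scal _ x (C / INR (S n)) _ Hd).
    cbv beta in *.
    replace (C * (x - t0) ^ n) with (C / INR (S n) * (INR (S n) * 1 * (x - t0) ^ Init.Nat.pred (S n))).
    2: { replace (Init.Nat.pred (S n)) with n by reflexivity. field. auto. }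
    eapply is_derive_ext; [|exact Hd2]. intros. cbv beta. match goal with |- ?a = ?b => change (@eq R a b) end. unfold Rdiv; ring.
  - intros x _. apply cont_mult; [apply cont_const|].
    eapply cont_of_derive. auto_derive. auto. reflexivity.
Qed.

Lemma exRInt (F : R -> R) a b : (forall x, continuous F x) -> ex_RInt F a b.
Proof. intros HF. apply (ex_RInt_continuous (V:=R_CompleteNormedModule)). auto. Qed.

Lemma cont_pow (f : R -> R) n x : continuous f x -> continuous (fun t => f t ^ n) x.
Proof.
  intros Hf. induction n. apply cont_const.
  simpl. apply cont_mult; auto.
Qed.

Lemma INT_bound (F : R -> R) C n t0 t : (forall x, continuous F x) -> t0 <= t ->
  (forall s, t0 < s < t -> Rabs (F s) <= C * (s - t0) ^ n) ->
  Rabs (RInt F t0 t) <= C * (t - t0) ^ (S n) / INR (S n).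
Proof.
  intros HF Ht Hb.
  eapply Rle_trans; [apply abs_RInt_le; auto; apply exRInt; auto|].
  rewrite <- INT_poly by auto.
  apply RInt_le; auto.
  - apply exRInt. intros; apply continuous_Rabs_comp; auto.
  - apply exRInt. intros; apply cont_mult; [apply cont_const|apply cont_pow; apply cont_plus; [apply cont_id|apply cont_const]].
Qed.

Fixpoint pic (w0 t0 z10 z20 : R) (B : R -> R) (n : nat) : (R -> R) * (R -> R) :=
  match n with
  | O => (fun _ => z10, fun _ => z20)
  | S m => (fun t => RInt (fun s => w0 * snd (pic w0 t0 z10 z20 B m) s) t0 (Rmax t t0),
            fun t => RInt (fun s => - w0 * fst (pic w0 t0 z10 z20 B m) s
                                    - B s * snd (pic w0 t0 z10 z20 B m) s) t0 (Rmax t t0))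
  end.

Lemma pic_cont w0 t0 z10 z20 (B : R -> R) : (forall x, continuous B x) ->
  forall n x, continuous (fst (pic w0 t0 z10 z20 B n)) x /\ continuous (snd (pic w0 t0 z10 z20 B n)) x.
Proof.
  intros HB n. induction n; intros x.
  - split; apply cont_const.
  - simpl. split; apply INT_cont; intros y; destruct (IHn y) as [H1 H2].
    + apply cont_mult; auto; apply cont_const.
    + apply cont_plus; [apply cont_mult; auto; apply cont_const|].
      apply cont_opp. apply cont_mult; auto.
Qed.

Lemma pic_deriv w0 t0 z10 z20 (B : R -> R) : (forall x, continuous B x) ->
  forall n t, t0 < t ->
  is_derive (fst (pic w0 t0 z10 z20 B (S n))) t (w0 * snd (pic w0 t0 z10 z20 B n) t) /\
  is_derive (snd (pic w0 t0 z10 z20 B (S n))) t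
    (- w0 * fst (pic w0 t0 z10 z20 B n) t - B t * snd (pic w0 t0 z10 z20 B n) t).
Proof.
  intros HB n t Ht. assert (HC := pic_cont w0 t0 z10 z20 B HB n).
  simpl. split.
  + apply (INT_deriv2 (fun s => w0 * snd (pic w0 t0 z10 z20 B n) s) t0 t); auto; intros y; destruct (HC y) as [H1 H2].
    apply cont_mult; auto; apply cont_const.
  + apply (INT_deriv2 (fun s => - w0 * fst (pic w0 t0 z10 z20 B n) s - B s * snd (pic w0 t0 z10 z20 B n) s) t0 t); auto; intros y; destruct (HC y) as [H1 H2].
    apply cont_plus; [apply cont_mult; auto; apply cont_const|].
    apply cont_opp. apply cont_mult; auto.
Qed.

Lemma pic_t0 w0 t0 z10 z20 (B : R -> R) n t : t <= t0 ->
  fst (pic w0 t0 z10 z20 B (S n)) t = 0 /\ snd (pic w0 t0 z10 z20 B (S n)) t = 0.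
Proof.
  intros Ht. simpl. rewrite Rmax_right by lra. split; apply (RInt_point (V:=R_CompleteNormedModule)).
Qed.

Lemma pic_bound w0 t0 z10 z20 (B : R -> R) Bm : 0 < w0 -> (forall x, continuous B x) ->
  (forall x, 0 <= B x <= Bm) ->
  forall n t, Rabs (fst (pic w0 t0 z10 z20 B n) t) + Rabs (snd (pic w0 t0 z10 z20 B n) t) <=
    (Rabs z10 + Rabs z20) * (2 * w0 + Bm) ^ n * (Rmax t t0 - t0) ^ n / INR (fact n).
Proof.
  intros Hw HB HBm n. induction n; intros t.
  - simpl. lra.
  - set (M := Rabs z10 + Rabs z20). set (K := 2 * w0 + Bm).
    assert (HM : 0 <= M) by (unfold M; generalize (Rabs_pos z10) (Rabs_pos z20); lra).
    assert (HBm0 : 0 <= Bm) by (destruct (HBm 0); lra).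
    assert (HK : 0 <= K) by (unfold K; lra).
    assert (Hf : 0 < INR (fact n)) by (apply lt_0_INR; apply lt_O_fact).
    destruct (Rle_or_lt t t0) as [Ht|Ht].
    + destruct (pic_t0 w0 t0 z10 z20 B n t Ht) as [E1 E2]. rewrite E1, E2, Rabs_R0.
      rewrite Rmax_right by lra. replace (t0 - t0) with 0 by ring. rewrite pow_i by lia.
      unfold Rdiv. rewrite Rmult_0_r, Rmult_0_l. lra.
    + rewrite Rmax_left by lra.
      set (C0 := M * K ^ n / INR (fact n)).
      assert (HC0 : 0 <= C0) by (unfold C0; apply Rdiv_le_0_compat; [apply Rmult_le_pos; [auto|apply pow_le; auto]|auto]).
      assert (IH : forall s, t0 < s -> Rabs (fst (pic w0 t0 z10 z20 B n) s) + Rabs (snd (pic w0 t0 z10 z20 B n) s) <= C0 * (s - t0) ^ n).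
      { intros s Hs. generalize (IHn s). rewrite Rmax_left by lra. unfold C0. intros Hh.
        replace (M * K ^ n / INR (fact n) * (s - t0) ^ n) with (M * K ^ n * (s - t0) ^ n / INR (fact n)) by (field; lra).
        exact Hh. }
      assert (HC := pic_cont w0 t0 z10 z20 B HB n).
      assert (B1 : Rabs (fst (pic w0 t0 z10 z20 B (S n)) t) <= (w0 * C0) * (t - t0) ^ (S n) / INR (S n)).
      { simpl. rewrite Rmax_left by lra. apply INT_bound; [|lra|].
        - intros y; destruct (HC y) as [H1 H2]. apply cont_mult; auto; apply cont_const.
        - intros s [Hs1 Hs2]. specialize (IH s Hs1). rewrite Rabs_mult, (Rabs_right w0) by lra.
          generalize (Rabs_pos (fst (pic w0 t0 z10 z20 B n) s)). intros.
          rewrite Rmult_assoc. apply Rmult_le_compat_l; lra. }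
      assert (B2 : Rabs (snd (pic w0 t0 z10 z20 B (S n)) t) <= ((w0 + Bm) * C0) * (t - t0) ^ (S n) / INR (S n)).
      { simpl. rewrite Rmax_left by lra. apply INT_bound; [|lra|].
        - intros y; destruct (HC y) as [H1 H2]. apply cont_plus; [apply cont_mult; auto; apply cont_const|].
          apply cont_opp. apply cont_mult; auto.
        - intros s [Hs1 Hs2]. specialize (IH s Hs1).
          set (p := fst (pic w0 t0 z10 z20 B n) s) in *. set (q := snd (pic w0 t0 z10 z20 B n) s) in *.
          destruct (HBm s) as [Hb1 Hb2].
          eapply Rle_trans. apply Rabs_triang.
          rewrite Rabs_Ropp, !Rabs_mult, Rabs_Ropp, (Rabs_right w0), (Rabs_right (B s)) by lra.
          assert (Hp := Rabs_pos p). assert (Hq := Rabs_pos q).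
          assert (B s * Rabs q <= Bm * Rabs q) by (apply Rmult_le_compat_r; lra).
          assert (X : 0 <= C0 * (s - t0) ^ n) by (apply Rmult_le_pos; [auto|apply pow_le; lra]).
          assert (w0 * Rabs p + Bm * Rabs q <= (w0 + Bm) * (Rabs p + Rabs q)) by nra.
          assert ((w0 + Bm) * (Rabs p + Rabs q) <= (w0 + Bm) * (C0 * (s - t0) ^ n)) by (apply Rmult_le_compat_l; lra).
          lra. }
      assert (HS : INR (S n) <> 0) by (apply not_0_INR; lia).
      assert (Hfact : INR (fact (S n)) = INR (S n) * INR (fact n)) by (rewrite fact_simpl, mult_INR; auto).
      rewrite Hfact.
      replace (M * K ^ S n * (t - t0) ^ S n / (INR (S n) * INR (fact n))) with
        ((w0 * C0) * (t - t0) ^ (S n) / INR (S n) + ((w0 + Bm) * C0) * (t - t0) ^ (S n) / INR (S n)).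
      lra. change (K ^ S n) with (K * K ^ n). unfold C0, K. field. split; lra.
Qed.

Lemma Un_cv_scal (u : nat -> R) l M : Un_cv u l -> Un_cv (fun n => M * u n) (M * l).
Proof.
  intros H. apply is_lim_seq_Reals. apply is_lim_seq_Reals in H.
  apply (is_lim_seq_scal_l u M l H).
Qed.

Lemma Un_cv_ext (u v : nat -> R) l : (forall n, u n = v n) -> Un_cv u l -> Un_cv v l.
Proof. intros E H. assert (u = v) by (apply functional_extensionality; auto). subst; auto. Qed.

Lemma cvn_gen (fn : nat -> R -> R) (t0 M K : R) : 0 <= M -> 0 <= K ->
  (forall n y, Rabs (fn n y) <= M * K ^ n * (Rmax y t0 - t0) ^ n / INR (fact n)) ->
  CVN_R fn.
Proof.
  intros HM HK Hb r.
  set (X := K * (r + Rabs t0)).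
  assert (HX : 0 <= X) by (unfold X; generalize (Rabs_pos t0); destruct r; simpl; nra).
  destruct (exist_exp X) as [l Hl].
  exists (fun n => M * X ^ n / INR (fact n)). exists (M * l). split.
  - apply Un_cv_ext with (fun n => M * sum_f_R0 (fun i => / INR (fact i) * X ^ i) n).
    + intros n. rewrite scal_sum. apply sum_eq. intros i _.
      assert (0 < INR (fact i)) by (apply lt_0_INR; apply lt_O_fact).
      rewrite Rabs_right. field. lra.
      apply Rle_ge. apply Rdiv_le_0_compat; [apply Rmult_le_pos; [auto|apply pow_le; auto]|lra].
    + apply Un_cv_scal. exact Hl.
  - intros n y Hy. eapply Rle_trans; [apply Hb|].
    unfold Boule in Hy. rewrite Rminus_0_r in Hy.
    assert (0 < INR (fact n)) by (apply lt_0_INR; apply lt_O_fact).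
    unfold Rdiv. apply Rmult_le_compat_r; [left; apply Rinv_0_lt_compat; lra|].
    unfold X. rewrite Rpow_mult_distr, <- Rmult_assoc.
    apply Rmult_le_compat_l; [apply Rmult_le_pos; [auto|apply pow_le; auto]|].
    apply pow_incr. split. generalize (Rmax_r y t0); lra.
    generalize (Rabs_pos t0) (Rle_abs y) (Rle_abs (-t0)). rewrite Rabs_Ropp. intros.
    generalize (cond_pos r). unfold Rmax. destruct (Rle_dec y t0); lra.
Qed.

Lemma CVU_sub fn f R c (d : posreal) : CVU fn f 0 R -> (forall y, Boule c d y -> Boule 0 R y) -> CVU fn f c d.
Proof.
  intros H Hs eps He. destruct (H eps He) as [N HN]. exists N. intros n y Hn Hy. apply HN; auto.
Qed.

Lemma CVU_lin fa fb ga gb c d (al be : R -> R) A Bb : CVU fa ga c d -> CVU fb gb c d ->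
  0 <= A -> 0 <= Bb -> (forall y, Rabs (al y) <= A) -> (forall y, Rabs (be y) <= Bb) ->
  CVU (fun n y => al y * fa n y + be y * fb n y) (fun y => al y * ga y + be y * gb y) c d.
Proof.
  intros Ha Hb HA HB Hal Hbe eps He.
  set (e' := eps / (A + Bb + 1)).
  assert (He' : 0 < e') by (unfold e'; apply Rdiv_lt_0_compat; lra).
  destruct (Ha e' He') as [N1 H1]. destruct (Hb e' He') as [N2 H2].
  exists (max N1 N2). intros n y Hn Hy.
  specialize (H1 n y ltac:(lia) Hy). specialize (H2 n y ltac:(lia) Hy).
  replace (al y * ga y + be y * gb y - (al y * fa n y + be y * fb n y))
    with (al y * (ga y - fa n y) + be y * (gb y - fb n y)) by ring.
  eapply Rle_lt_trans; [apply Rabs_triang|]. rewrite !Rabs_mult.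
  assert (Rabs (al y) * Rabs (ga y - fa n y) <= A * e').
  { apply Rmult_le_compat; auto using Rabs_pos; lra. }
  assert (Rabs (be y) * Rabs (gb y - fb n y) <= Bb * e').
  { apply Rmult_le_compat; auto using Rabs_pos; lra. }
  assert (A * e' + Bb * e' < eps).
  { unfold e'. replace (A * (eps / (A + Bb + 1)) + Bb * (eps / (A + Bb + 1))) with (eps * ((A + Bb) / (A + Bb + 1))) by (field; lra).
    assert ((A + Bb) / (A + Bb + 1) < 1). { apply Rmult_lt_reg_r with (A + Bb + 1); [lra|]. 
      replace ((A + Bb) / (A + Bb + 1) * (A + Bb + 1)) with (A + Bb) by (field; lra). lra. }
    assert (0 <= (A + Bb) / (A + Bb + 1)) by (apply Rdiv_le_0_compat; lra). nra. }
  lra.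
Qed.

Lemma der_plus (f g : R -> R) x df dg : is_derive f x df -> is_derive g x dg ->
  is_derive (fun t => f t + g t) x (df + dg).
Proof. intros; apply (is_derive_plus f g); auto. Qed.

Lemma der_val (f : R -> R) x l l' : is_derive f x l -> l = l' -> is_derive f x l'.
Proof. intros H ->; auto. Qed.

Lemma der_ext (f g : R -> R) x l : (forall t, f t = g t) -> is_derive f x l -> is_derive g x l.
Proof. intros E H. assert (f = g) by (apply functional_extensionality; auto). subst; auto. Qed.

Definition fn1 w0 t0 z10 z20 (B : R -> R) := fun n y => fst (pic w0 t0 z10 z20 B n) y.
Definition fn2 w0 t0 z10 z20 (B : R -> R) := fun n y => snd (pic w0 t0 z10 z20 B n) y.

Lemma SP_deriv w0 t0 z10 z20 (B : R -> R) : (forall x, continuous B x) ->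
  forall n y, t0 < y ->
  is_derive (SP (fn1 w0 t0 z10 z20 B) (S n)) y (w0 * SP (fn2 w0 t0 z10 z20 B) n y) /\
  is_derive (SP (fn2 w0 t0 z10 z20 B) (S n)) y
     (- w0 * SP (fn1 w0 t0 z10 z20 B) n y - B y * SP (fn2 w0 t0 z10 z20 B) n y).
Proof.
  intros HB n y Hy. induction n.
  - destruct (pic_deriv w0 t0 z10 z20 B HB 0 y Hy) as [D1 D2].
    split.
    + eapply der_val. eapply der_ext; [|apply der_plus; [apply (is_derive_const z10 y)|exact D1]].
      intros t. reflexivity.
      unfold SP, fn2. simpl. unfold zero; simpl. ring.
    + eapply der_val. eapply der_ext; [|apply der_plus; [apply (is_derive_const z20 y)|exact D2]].
      intros t. reflexivity.
      unfold SP, fn1, fn2. simpl. unfold zero; simpl. ring.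
  - destruct IHn as [I1 I2]. destruct (pic_deriv w0 t0 z10 z20 B HB (S n) y Hy) as [D1 D2].
    split.
    + eapply der_val. eapply der_ext; [|apply der_plus; [exact I1|exact D1]].
      intros t. reflexivity.
      unfold SP, fn2. simpl. ring.
    + eapply der_val. eapply der_ext; [|apply der_plus; [exact I2|exact D2]].
      intros t. reflexivity.
      unfold SP, fn1, fn2. simpl. ring.
Qed.

Lemma SP_cont (fn : nat -> R -> R) : (forall n x, continuous (fn n) x) ->
  forall n x, continuous (SP fn n) x.
Proof.
  intros Hc n. induction n; intros x.
  - apply cont_ext with (fn 0%nat). intros; reflexivity. auto.
  - apply cont_ext with (fun y => SP fn n y + fn (S n) y). intros; reflexivity.
    apply cont_plus; auto.
Qed.

Lemma SP_t0 w0 t0 z10 z20 (B : R -> R) n :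
  SP (fn1 w0 t0 z10 z20 B) n t0 = z10 /\ SP (fn2 w0 t0 z10 z20 B) n t0 = z20.
Proof.
  induction n. unfold SP, fn1, fn2; simpl; auto.
  destruct IHn as [I1 I2]. destruct (pic_t0 w0 t0 z10 z20 B n t0 (Rle_refl _)) as [E1 E2].
  unfold SP in *; simpl. unfold fn1, fn2 in *. rewrite I1, I2, E1, E2. split; ring.
Qed.

Lemma series_props w0 t0 z10 z20 (B : R -> R) Bm : 0 < w0 -> (forall x, continuous B x) ->
  (forall x, 0 <= B x <= Bm) ->
  exists G1 G2 : R -> R,
    (forall x, continuous G1 x) /\ (forall x, continuous G2 x) /\ G1 t0 = z10 /\ G2 t0 = z20 /\
    (forall t, t0 < t -> is_derive G1 t (w0 * G2 t) /\ is_derive G2 t (- w0 * G1 t - B t * G2 t)).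
Proof.
  intros Hw HB HBm.
  assert (HBm0 : 0 <= Bm) by (destruct (HBm 0); lra).
  assert (HM : 0 <= Rabs z10 + Rabs z20) by (generalize (Rabs_pos z10) (Rabs_pos z20); lra).
  assert (HK : 0 <= 2 * w0 + Bm) by lra.
  assert (Hb := pic_bound w0 t0 z10 z20 B Bm Hw HB HBm).
  assert (C1 : CVN_R (fn1 w0 t0 z10 z20 B)).
  { apply (cvn_gen _ t0 _ _ HM HK). intros n y. unfold fn1. specialize (Hb n y).
    generalize (Rabs_pos (snd (pic w0 t0 z10 z20 B n) y)). lra. }
  assert (C2 : CVN_R (fn2 w0 t0 z10 z20 B)).
  { apply (cvn_gen _ t0 _ _ HM HK). intros n y. unfold fn2. specialize (Hb n y).
    generalize (Rabs_pos (fst (pic w0 t0 z10 z20 B n) y)). lra. }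
  set (f1 := fn1 w0 t0 z10 z20 B) in *. set (f2 := fn2 w0 t0 z10 z20 B) in *.
  set (cv1 := CVN_R_CVS f1 C1). set (cv2 := CVN_R_CVS f2 C2).
  exists (SFL f1 cv1), (SFL f2 cv2).
  assert (L1 : forall x, Un_cv (fun N => SP f1 N x) (SFL f1 cv1 x)).
  { intros x. unfold SFL. destruct (cv1 x). auto. }
  assert (L2 : forall x, Un_cv (fun N => SP f2 N x) (SFL f2 cv2 x)).
  { intros x. unfold SFL. destruct (cv2 x). auto. }
  assert (U1 : forall R, CVU (SP f1) (SFL f1 cv1) 0 R) by (intros R; apply CVN_CVU; apply C1).
  assert (U2 : forall R, CVU (SP f2) (SFL f2 cv2) 0 R) by (intros R; apply CVN_CVU; apply C2).
  assert (PC := pic_cont w0 t0 z10 z20 B HB).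
  assert (SC1 : forall n x, continuous (SP f1 n) x).
  { apply SP_cont. intros n x. apply (PC n x). }
  assert (SC2 : forall n x, continuous (SP f2 n) x).
  { apply SP_cont. intros n x. apply (PC n x). }
  assert (Gc : forall (f : nat -> R -> R) G, (forall R, CVU (SP f) G 0 R) -> (forall n x, continuous (SP f n) x) ->
           forall x, continuous G x).
  { intros f G HU HC x. apply continuity_pt_filterlim.
    assert (Hr : 0 < Rabs x + 1) by (generalize (Rabs_pos x); lra).
    apply (CVU_continuity (SP f) G 0 (mkposreal _ Hr)); auto.
    - intros n y _. apply continuity_pt_filterlim. apply HC.
    - unfold Boule; simpl. rewrite Rminus_0_r. lra. }
  split; [apply (Gc f1); auto|]. split; [apply (Gc f2); auto|].
  split.
  { apply (UL_sequence (fun N => SP f1 N t0)); auto.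
    intros eps He. exists O. intros n _. unfold f1. rewrite (proj1 (SP_t0 w0 t0 z10 z20 B n)).
    unfold Rdist. rewrite Rminus_diag, Rabs_R0. lra. }
  split.
  { apply (UL_sequence (fun N => SP f2 N t0)); auto.
    intros eps He. exists O. intros n _. unfold f2. rewrite (proj2 (SP_t0 w0 t0 z10 z20 B n)).
    unfold Rdist. rewrite Rminus_diag, Rabs_R0. lra. }
  intros t Ht.
  assert (Hd : 0 < (t - t0) / 2) by lra.
  set (d := mkposreal _ Hd).
  assert (Hsub : forall y, Boule t d y -> Boule 0 (mkposreal (Rabs t + t - t0) ltac:(generalize (Rabs_pos t); lra)) y).
  { intros y Hy. unfold Boule in *; simpl in *. rewrite Rminus_0_r.
    apply Rabs_lt_between in Hy. generalize (Rle_abs t) (Rle_abs (-t)). rewrite Rabs_Ropp. intros.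
    apply Rabs_lt_between. lra. }
  assert (Hpos : forall y, Boule t d y -> t0 < y).
  { intros y Hy. unfold Boule in Hy; simpl in Hy. apply Rabs_lt_between in Hy. lra. }
  assert (Hconv : forall f G, (forall x, Un_cv (fun N => SP f N x) (G x)) ->
            forall y, Un_cv (fun n => SP f (S n) y) (G y)).
  { intros f G HL y. apply is_lim_seq_Reals. apply (is_lim_seq_incr_1 (fun n => SP f n y) (G y)).
    apply is_lim_seq_Reals. auto. }
  split.
  - apply is_derive_Reals.
    replace (w0 * SFL f2 cv2 t) with ((fun y => w0 * SFL f2 cv2 y + 0 * SFL f2 cv2 y) t) by (cbv beta; ring).
    apply (CVU_derivable (fun n => SP f1 (S n)) (fun n y => w0 * SP f2 n y + 0 * SP f2 n y)
             (SFL f1 cv1) (fun y => w0 * SFL f2 cv2 y + 0 * SFL f2 cv2 y) t d).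
    + apply (CVU_lin _ _ _ _ _ _ (fun _ => w0) (fun _ => 0) w0 0); try (apply CVU_sub with (2 := Hsub); auto); try lra.
      intros; rewrite Rabs_right; lra. intros; rewrite Rabs_R0; lra.
    + intros y _. apply Hconv. auto.
    + intros n y Hy. apply is_derive_Reals. eapply der_val; [exact (proj1 (SP_deriv w0 t0 z10 z20 B HB n y (Hpos y Hy)))|cbv beta; unfold f1, f2; match goal with |- ?a = ?b => change (@eq R a b) end; ring].
    + unfold Boule; rewrite Rminus_diag, Rabs_R0; apply cond_pos.
  - apply is_derive_Reals.
    replace (- w0 * SFL f1 cv1 t - B t * SFL f2 cv2 t) with ((fun y => - w0 * SFL f1 cv1 y + (- B y) * SFL f2 cv2 y) t) by (cbv beta; ring).
    apply (CVU_derivable (fun n => SP f2 (S n)) (fun n y => - w0 * SP f1 n y + (- B y) * SP f2 n y)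
             (SFL f2 cv2) (fun y => - w0 * SFL f1 cv1 y + (- B y) * SFL f2 cv2 y) t d).
    + apply (CVU_lin _ _ _ _ _ _ (fun _ => - w0) (fun y => - B y) w0 Bm); try (apply CVU_sub with (2 := Hsub); auto); try lra.
      intros; rewrite Rabs_Ropp, Rabs_right; lra.
      intros y; rewrite Rabs_Ropp; destruct (HBm y); rewrite Rabs_right; lra.
    + intros y _. apply Hconv. auto.
    + intros n y Hy. apply is_derive_Reals. eapply der_val; [exact (proj2 (SP_deriv w0 t0 z10 z20 B HB n y (Hpos y Hy)))|cbv beta; unfold f1, f2; match goal with |- ?a = ?b => change (@eq R a b) end; ring].
    + unfold Boule; rewrite Rminus_diag, Rabs_R0; apply cond_pos.
Qed.

Ltac rring := match goal with |- ?a = ?b => change (@eq R a b) end; ring.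

Lemma rc_of_cont (f : R -> R) s : continuous f s -> filterlim f (at_right s) (locally (f s)).
Proof. intros Hc. eapply filterlim_filter_le_1; [apply at_right_le|exact Hc]. Qed.

Lemma existence w0 a wd h H : 0 < w0 -> 0 < a -> 0 < wd -> 0 < h -> 0 < H ->
  forall t0 r0 z10 z20 d0, 0 <= t0 ->
     exists x, is_solution w0 a wd h H t0 x /\
       tr x t0 = r0 /\ tz1 x t0 = z10 /\ tz2 x t0 = z20 /\ td x t0 = d0.
Proof.
  intros Hw Ha Hwd Hh HH t0 r0 z10 z20 d0 _.
  set (D := Dsol wd t0 d0).
  set (Bf := fun t => (a/2) * exp (D t)).
  assert (DC : forall x, continuous D x) by (intros; apply Dsol_cont; auto).
  assert (BC : forall x, continuous Bf x).
  { intros x. apply cont_mult; [apply cont_const|]. apply continuous_exp_comp. auto. }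
  assert (BB : forall x, 0 <= Bf x <= (a/2) * (1 + exp d0)).
  { intros x. unfold Bf. assert (0 < exp (D x)) by apply exp_pos.
    assert (exp (D x) <= 1 + exp d0) by (apply exp_Dsol_le; auto). split; nra. }
  destruct (series_props w0 t0 z10 z20 Bf _ Hw BC BB) as [G1 [G2 [GC1 [GC2 [G10 [G20 GD]]]]]].
  set (Q := fun s => H * (- (a/2) * exp (D s) * (G2 s * G2 s))).
  assert (QC : forall x, continuous Q x).
  { intros x. unfold Q. apply cont_mult; [apply cont_const|]. apply cont_mult.
    apply cont_mult; [apply cont_const|apply continuous_exp_comp; auto]. apply cont_mult; auto. }
  set (F := fun s => exp (h * (s - t0)) * Q s).
  assert (FC : forall x, continuous F x).
  { intros x. unfold F. apply cont_mult; auto. apply continuous_exp_comp.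
    apply cont_mult; [apply cont_const|]. apply cont_plus; [apply cont_id|apply cont_const]. }
  set (Rf := fun t => exp (- h * (t - t0)) * (r0 + RInt F t0 t)).
  assert (RD1 : forall t, is_derive Rf t (- h * Rf t + Q t)).
  { intros t. unfold Rf.
    assert (E1 : is_derive (fun t => exp (- h * (t - t0))) t (- h * exp (- h * (t - t0)))).
    { auto_derive. auto. unfold Rminus; ring. }
    assert (E2 : is_derive (fun t => r0 + RInt F t0 t) t (F t)).
    { eapply der_val. apply der_plus. apply (is_derive_const r0 t). apply INT_deriv; auto.
      unfold zero; simpl. ring. }
    eapply der_val. apply (is_derive_mult (fun t => exp (- h * (t - t0))) (fun t => r0 + RInt F t0 t) t _ _ E1 E2).
    intros; apply Rmult_comm.
    unfold F. simpl. unfold mult, plus; simpl.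
    assert (He : exp (- h * (t - t0)) * exp (h * (t - t0)) = 1).
    { rewrite <- exp_plus. replace (- h * (t - t0) + h * (t - t0)) with 0 by ring. apply exp_0. }
    rewrite <- (Rmult_assoc (exp (- h * (t - t0))) (exp (h * (t - t0)))), He. ring. }
  exists (mktraj Rf G1 G2 D). simpl.
  split; [|split; [|split; [|split]]].
  - split; [|split; [|split; [|split]]].
    + intros t Ht. destruct (GD t Ht) as [D1 D2]. split; [|split; [|split]].
      * rewrite f_r_eq. apply RD1.
      * rewrite f_z1_eq. auto.
      * rewrite f_z2_eq. eapply der_val. apply D2. unfold Bf. simpl. rring.
      * unfold f_d, D. apply Dsol_deriv; auto.
    + apply rc_of_cont. eapply cont_of_derive. apply RD1.
    + apply rc_of_cont. auto.
    + apply rc_of_cont. auto.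
    + apply rc_of_cont. auto.
  - unfold Rf. replace (- h * (t0 - t0)) with 0 by ring. rewrite exp_0.
    rewrite (RInt_point (V:=R_CompleteNormedModule)). unfold zero; simpl. ring.
  - auto.
  - auto.
  - unfold D. apply Dsol_t0.
Qed.

Theorem mainTheorem5 (w0 a wd h H : R) :
  0 < w0 -> 0 < a -> 0 < wd -> 0 < h -> 0 < H ->
  GUAS w0 a wd h H.
Proof.
  intros Hw Ha Hwd Hh HH. split; [|split; [|split]].
  - apply existence; auto.
  - apply GUAS_stab; auto.
  - apply GUAS_bdd; auto.
  - apply GUAS_attr; auto.
Qed.
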